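(* Let $S$ and $R$ be finite sequences of formulas and $I,J$ models. Then $I\equiv_{\emptyset S\cdot R}J$ holds if and only if both $I\equiv_{\emptyset S}J$ and $I\equiv_{\emptyset R}J$ hold.
   Context: Propositional models are truth assignments over a finite set of variables; a formula used where a set of models is expected stands for its set of models. A doxastic state is a sequence $C=[C(0),\ldots,C(k)]$ of nonempty, pairwise disjoint sets of models covering all models; $I\le_C J$ iff $I\in C(i)$, $J\in C(j)$ with $i\le j$; $I\equiv_C J$ iff $I\le_C J$ and $J\le_C I$. The flat doxastic state $\emptyset$ is $[\text{all models}]$. Lexicographic revision: $C\,\mathrm{lex}(A)=[C(0)\cap A,\ldots,C(k)\cap A,C(0)\setminus A,\ldots,C(k)\setminus A]$, empty sets discarded. For a sequence of formulas $T=[T_1,\ldots,T_n]$, $\emptyset T$ denotes $\emptyset$ revised lexicographically by $T_1$, then $T_2$, ..., then $T_n$. $S\cdot R$ is concatenation. *)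

(* Defs.v *)
From mathcomp Require Import all_boot.
Set Implicit Arguments. Unset Strict Implicit. Unset Printing Implicit Defensive.

Inductive formula (n : nat) : Type :=
| FVar of 'I_n
| FTop
| FBot
| FNot of formula n
| FAnd of formula n & formula n
| FOr of formula n & formula n
| FImp of formula n & formula n.

Definition model (n : nat) := {ffun 'I_n -> bool}.

Fixpoint sat n (I : model n) (f : formula n) : bool :=
  match f with
  | FVar x => I x
  | FTop => true
  | FBot => false
  | FNot g => ~~ sat I g
  | FAnd g h => sat I g && sat I h
  | FOr g h => sat I g || sat I h
  | FImp g h => sat I g ==> sat I h
  end.

Definition mods n (f : formula n) : {set model n} := [set I | sat I f].

(* A doxastic state: a sequence of sets of models [C(0); ...; C(k)]. *)
Definition doxstate n := seq {set model n}.

Definition flat n : doxstate n := [:: [set: model n]].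

Definition lex n (C : doxstate n) (A : formula n) : doxstate n :=
  [seq X <- [seq X :&: mods A | X <- C] ++ [seq X :\: mods A | X <- C] | X != set0].

(* emptyset T : flat state revised by T_1, ..., T_n in order. *)
Definition revise_seq n (C : doxstate n) (T : seq (formula n)) : doxstate n :=
  foldl (@lex n) C T.

Definition flat_rev n (T : seq (formula n)) : doxstate n := revise_seq (flat n) T.

Definition le_st n (C : doxstate n) (I J : model n) : Prop :=
  exists i j, (i <= j)%N /\ (i < size C)%N /\ (j < size C)%N /\
    I \in nth set0 C i /\ J \in nth set0 C j.

Definition equiv_st n (C : doxstate n) (I J : model n) : Prop :=
  le_st C I J /\ le_st C J I.

(* Main.v *)
Require Import Defs.
From mathcomp Require Import all_boot.
From mathcomp Require Import zify.
Set Implicit Arguments. Unset Strict Implicit.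

Definition Inv n (C : doxstate n) := forall I : model n, count (fun X : {set model n} => I \in X) (C : seq {set model n}) = 1%N.
Definition sameb n (C : doxstate n) (I J : model n) :=
  has (fun X : {set model n} => (I \in X) && (J \in X)) (C : seq {set model n}).

Lemma count_filter_imp T (p q : pred T) s : (forall x, p x -> q x) ->
  count p (filter q s) = count p s.
Proof.
move=> H; elim: s => //= x s IH; case Hq: (q x) => /=; rewrite IH //.
by case Hp: (p x) => //; rewrite (H _ Hp) in Hq.
Qed.

Lemma has_filter_imp T (p q : pred T) s : (forall x, p x -> q x) ->
  has p (filter q s) = has p s.
Proof.
move=> H; elim: s => //= x s IH; case Hq: (q x) => /=; rewrite IH //.
by case Hp: (p x) => //; rewrite (H _ Hp) in Hq.
Qed.

Lemma Inv_lex n (C : doxstate n) A : Inv C -> Inv (lex C A).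
Proof.
move=> H I; rewrite /lex count_filter_imp; last first.
  by move=> X HX; apply/set0Pn; exists I.
rewrite count_cat !count_map.
have E1 : count (preim (fun X => X :&: mods A) (fun X => I \in X)) C =
   if sat I A then 1%N else 0%N.
  rewrite -(H I); case: (boolP (sat I A)) => HA.
    by apply: eq_count => X /=; rewrite inE /mods inE HA andbT.
  apply/eqP; rewrite eqn0Ngt -has_count; apply/hasPn => X _ /=.
  by rewrite inE /mods inE (negbTE HA) andbF.
have E2 : count (preim (fun X => X :\: mods A) (fun X => I \in X)) C =
   if sat I A then 0%N else 1%N.
  rewrite -(H I); case: (boolP (sat I A)) => HA.
    apply/eqP; rewrite eqn0Ngt -has_count; apply/hasPn => X _ /=.
    by rewrite inE /mods inE HA.
  by apply: eq_count => X /=; rewrite inE /mods inE HA.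
by rewrite E1 E2; case: (sat I A).
Qed.

Lemma has_andb_const T (p : pred T) (b : bool) s :
  has (fun x => p x && b) s = has p s && b.
Proof. by elim: s => //= x s ->; case: b; rewrite ?andbT ?andbF. Qed.

Lemma sameb_lex n (C : doxstate n) A I J :
  sameb (lex C A) I J = sameb C I J && (sat I A == sat J A).
Proof.
rewrite /sameb /lex has_filter_imp; last first.
  by move=> X /andP [HX _]; apply/set0Pn; exists I.
rewrite has_cat !has_map.
rewrite /preim /=.
have E1 : forall X : {set model n}, (I \in X :&: mods A) && (J \in X :&: mods A) =
   ((I \in X) && (J \in X)) && (sat I A && sat J A).
  by move=> X; rewrite !inE /mods ?inE; do 2! case: (_ \in _) => //; case: (sat I A); case: (sat J A).
have E2 : forall X : {set model n}, (I \in X :\: mods A) && (J \in X :\: mods A) =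
   ((I \in X) && (J \in X)) && (~~ sat I A && ~~ sat J A).
  by move=> X; rewrite !inE /mods ?inE; do 2! case: (_ \in _) => //; case: (sat I A); case: (sat J A).
rewrite (eq_has E1) (eq_has E2) !has_andb_const.
by case: (sat I A); case: (sat J A); case: (has _ _); rewrite ?andbT ?andbF ?orbF.
Qed.

Lemma revise_gen n (C : doxstate n) T I J : Inv C ->
  Inv (revise_seq C T) /\
  sameb (revise_seq C T) I J = sameb C I J && all (fun f => sat I f == sat J f) T.
Proof.
elim: T C => [|f T IH] C HC /=; first by rewrite andbT.
have [H1 H2] := IH (lex C f) (Inv_lex f HC).
split => //. by rewrite /revise_seq /= -/(revise_seq _ _) H2 sameb_lex andbA.
Qed.

Lemma count1_uniq (T : eqType) (p : pred T) (x0 : T) s i j : count p s = 1%N ->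
  (i < size s)%N -> (j < size s)%N -> p (nth x0 s i) -> p (nth x0 s j) -> i = j.
Proof.
elim: s i j => //= x s IH [|i] [|j] //= Hc Hi Hj Hpi Hpj.
- move: Hc; rewrite Hpi /= => [[]] /eqP; rewrite eqn0Ngt -has_count => /hasPn H.
  by move: (H _ (mem_nth x0 Hj)); rewrite Hpj.
- move: Hc; rewrite Hpj /= => [[]] /eqP; rewrite eqn0Ngt -has_count => /hasPn H.
  by move: (H _ (mem_nth x0 Hi)); rewrite Hpi.
- congr S; apply: IH => //.
  move: Hc; case: (p x) => //= Hc.
  move/eqP: Hc; rewrite eqSS eqn0Ngt -has_count => /hasPn H.
  by move: (H _ (mem_nth x0 Hi)); rewrite Hpi.
Qed.

Lemma equiv_sameb n (C : doxstate n) I J : Inv C -> (equiv_st C I J <-> sameb C I J).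
Proof.
move=> HC; split.
  move=> [[i [j [Hij [Hi [Hj [HI HJ]]]]]] [i' [j' [Hij' [Hi' [Hj' [HJ' HI']]]]]]].
  have E1 := count1_uniq (HC I) Hi Hj' HI HI'.
  have E2 := count1_uniq (HC J) Hj Hi' HJ HJ'.
  have Eij : i = j by lia.
  rewrite -Eij in HJ; apply/hasP; exists (nth set0 C i); first exact: mem_nth.
  by rewrite HI HJ.
move=> /hasP [X HX /andP [HI HJ]].
have Hs : (index X C < size C)%N by rewrite index_mem.
split; exists (index X C), (index X C); (do 4! split => //); by rewrite nth_index.
Qed.

Lemma Inv_flat n : Inv (flat n).
Proof. by move=> I; rewrite /= inE. Qed.

Lemma flat_char n (T : seq (formula n)) I J :
  equiv_st (flat_rev T) I J <-> all (fun f => sat I f == sat J f) T.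
Proof.
have [H1 H2] := revise_gen T I J (@Inv_flat n).
rewrite /flat_rev equiv_sameb // H2 /sameb /= !inE /=. done.
Qed.

Theorem mainTheorem20 (n : nat) (S R : seq (formula n)) (I J : model n) :
  equiv_st (flat_rev (S ++ R)) I J <->
  equiv_st (flat_rev S) I J /\ equiv_st (flat_rev R) I J.
Proof.
rewrite !flat_char all_cat; split; first by move/andP.
by move=> [-> ->].
Qed.
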